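(* For every integer $k\ge 2$, $$F_v(J_{2k+1},J_{2k+1};2k+1)\le 5\,F_v(J_{k+1},J_{k+1};k+1).$$
   Context: All graphs are finite and simple. $J_n$ denotes the complete graph $K_n$ with one edge removed. ''A graph $F$ contains $H$'' means $F$ has a (not necessarily induced) subgraph isomorphic to $H$. $G\rightarrow(H_1,\dots,H_r)^v$ means: for every partition $V(G)=X_1\cup\dots\cup X_r$ there is $i$ such that the subgraph induced by $X_i$ contains $H_i$. $\mathcal{F}_v(H_1,\dots,H_r;k)$ is the set of $K_k$-free graphs $G$ with $G\rightarrow(H_1,\dots,H_r)^v$, and $F_v(H_1,\dots,H_r;k)$ is the minimum number of vertices of a graph in this set. *)

(* Defs.v *)
From mathcomp Require Import all_boot.
Set Implicit Arguments. Unset Strict Implicit. Unset Printing Implicit Defensive.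

Record graph := Graph {
  gsize : nat;
  gadj : rel 'I_gsize;
  gsym : symmetric gadj;
  girr : irreflexive gadj
}.

(* The subgraph of G induced by X contains H: there is an injective map from
   V(H) into X sending edges of H to edges of G (not necessarily induced). *)
Definition contains_in (G : graph) (X : {set 'I_(gsize G)}) (H : graph) : Prop :=
  exists f : 'I_(gsize H) -> 'I_(gsize G),
    [/\ injective f,
        (forall v, f v \in X) &
        (forall u v, gadj u v -> gadj (f u) (f v))].

Definition contains (G H : graph) : Prop := contains_in [set: 'I_(gsize G)] H.

Definition K_adj (n : nat) : rel 'I_n := fun i j => i != j.
Lemma K_sym n : symmetric (@K_adj n).
Proof. by move=> i j; rewrite /K_adj eq_sym. Qed.
Lemma K_irr n : irreflexive (@K_adj n).
Proof. by move=> i; rewrite /K_adj eqxx. Qed.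
Definition K (n : nat) : graph := Graph (@K_sym n) (@K_irr n).

(* J_n = K_n minus the edge {0,1}. *)
Definition J_adj (n : nat) : rel 'I_n :=
  fun i j => (i != j) &&
    ~~ (((val i == 0) && (val j == 1)) || ((val i == 1) && (val j == 0))).
Lemma J_sym n : symmetric (@J_adj n).
Proof. move=> i j; rewrite /J_adj eq_sym; by case: (val i == 0); case: (val i == 1); case: (val j == 0); case: (val j == 1). Qed.
Lemma J_irr n : irreflexive (@J_adj n).
Proof. by move=> i; rewrite /J_adj eqxx. Qed.
Definition J (n : nat) : graph := Graph (@J_sym n) (@J_irr n).

Definition Kfree (k : nat) (G : graph) : Prop := ~ contains G (K k).

(* G -> (H1, H2)^v : every 2-partition V(G) = X1 ∪ X2 (X2 = complement of X1)
   has X1 inducing a copy of H1 or X2 inducing a copy of H2. *)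
Definition varrows2 (G H1 H2 : graph) : Prop :=
  forall X : {set 'I_(gsize G)}, contains_in X H1 \/ contains_in (~: X) H2.

Definition in_Fv2 (H1 H2 : graph) (k : nat) (G : graph) : Prop :=
  Kfree k G /\ varrows2 G H1 H2.

Definition is_Fv2 (H1 H2 : graph) (k m : nat) : Prop :=
  (exists G, in_Fv2 H1 H2 k G /\ gsize G = m) /\
  (forall G, in_Fv2 H1 H2 k G -> m <= gsize G).

(* Main.v *)
Require Import Defs.
From mathcomp Require Import all_boot.
From mathcomp Require Import zify.
From Stdlib Require Import Classical.
Set Implicit Arguments. Unset Strict Implicit. Unset Printing Implicit Defensive.

Definition gof_adj (T : finType) (r : rel T) : rel 'I_#|T| :=
  fun i j => r (enum_val i) (enum_val j).
Lemma gof_sym (T : finType) (r : rel T) : symmetric r -> symmetric (gof_adj r).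
Proof. by move=> h i j; rewrite /gof_adj h. Qed.
Lemma gof_irr (T : finType) (r : rel T) : irreflexive r -> irreflexive (gof_adj r).
Proof. by move=> h i; rewrite /gof_adj h. Qed.
Definition graph_of (T : finType) (r : rel T) (hs : symmetric r) (hi : irreflexive r) : graph :=
  @Graph #|T| (gof_adj r) (gof_sym hs) (gof_irr hi).

Lemma gof_contains_in (T : finType) (r : rel T) (hs : symmetric r) (hi : irreflexive r)
  (Y : {set T}) (X : {set 'I_(gsize (graph_of hs hi))}) (H : graph) (F : 'I_(gsize H) -> T) :
  (forall t, (enum_rank t \in X) = (t \in Y)) ->
  injective F -> (forall v, F v \in Y) -> (forall u v, gadj u v -> r (F u) (F v)) ->
  contains_in X H.
Proof.
move=> hXY hF hY hE; exists (fun v => enum_rank (F v)); split.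
- by move=> u v /enum_rank_inj /hF.
- by move=> v; rewrite hXY.
- by move=> u v /hE; rewrite /= /gof_adj !enum_rankK.
Qed.

Lemma gof_contains_out (T : finType) (r : rel T) (hs : symmetric r) (hi : irreflexive r)
  (H : graph) : contains (graph_of hs hi) H ->
  exists F : 'I_(gsize H) -> T, injective F /\ (forall u v, gadj u v -> r (F u) (F v)).
Proof.
move=> [f [hf _ hE]]; exists (fun v => enum_val (f v)); split.
- by move=> u v /enum_val_inj /hf.
- by move=> u v /hE.
Qed.

Definition c5 (a b : 'I_5) : bool := ((a.+1 %% 5) == b) || ((b.+1 %% 5) == a).

Lemma c5_tri (a b c : 'I_5) : c5 a b -> c5 b c -> c5 a c -> False.
Proof.
case: a => [[|[|[|[|[|a]]]]] Ha] //; case: b => [[|[|[|[|[|b]]]]] Hb] //;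
  case: c => [[|[|[|[|[|c]]]]] Hc] //.
Qed.

Lemma c5_irr (a : 'I_5) : c5 a a = false.
Proof. case: a => [[|[|[|[|[|?]]]]] ?] //. Qed.

Definition padj (G : graph) : rel ('I_5 * 'I_(gsize G)) :=
  fun p q => if p.1 == q.1 then gadj p.2 q.2 else c5 p.1 q.1.
Lemma padj_sym G : symmetric (@padj G).
Proof.
move=> [a u] [b v]; rewrite /padj /=; have [e|hab] := eqVneq a b.
  exact: gsym.
by rewrite /c5 orbC.
Qed.
Lemma padj_irr G : irreflexive (@padj G).
Proof. by move=> [a u]; rewrite /padj /= eqxx girr. Qed.
Definition C5G (G : graph) : graph := graph_of (@padj_sym G) (@padj_irr G).

Lemma C5G_size G : gsize (C5G G) = 5 * gsize G.
Proof. by rewrite /= card_prod !card_ord. Qed.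

Lemma clique_K (G : graph) (T : finType) (A : {set T}) (phi : T -> 'I_(gsize G)) n :
  n <= #|A| -> {in A &, forall x y, x != y -> gadj (phi x) (phi y)} -> contains G (K n).
Proof.
move=> hn hA.
have hin : forall i : 'I_n, enum_val (widen_ord hn i) \in A.
  by move=> i; exact: enum_valP.
have hadj : forall u v : 'I_n, u != v ->
   gadj (phi (enum_val (widen_ord hn u))) (phi (enum_val (widen_ord hn v))).
  move=> u v huv; apply: hA; rewrite ?hin //.
  apply/negP => /eqP /enum_val_inj /(congr1 val) /= /val_inj e.
  by rewrite e eqxx in huv.
exists (fun i => phi (enum_val (widen_ord hn i))); split.
- move=> u v e; apply/eqP; apply/negPn/negP => huv.
  by have := hadj u v huv; rewrite e girr.
- by move=> v; rewrite in_setT.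
- by move=> u v /= huv; apply: hadj.
Qed.

Lemma C5G_Kfree (G : graph) k : Kfree k.+1 G -> Kfree (2 * k).+1 (C5G G).
Proof.
move=> hG /gof_contains_out [F [hF hE]].
have hE' : forall u v, u != v -> padj (F u) (F v) by move=> u v; apply: hE.
set a := (F ord0).1.
set A := [set x | (F x).1 == a].
have cl : forall (B : {set 'I_(2 * k).+1}) c, (forall x, x \in B -> (F x).1 == c) -> #|B| <= k.
  move=> B c hB; rewrite leqNgt; apply/negP => hlt; apply: hG.
  apply: (@clique_K G _ B (fun x => (F x).2)) => // x y hx hy hxy.
  have := hE' x y hxy; rewrite /padj.
  by rewrite (eqP (hB x hx)) (eqP (hB y hy)) eqxx.
have hA : #|A| <= k by apply: (cl A a) => x; rewrite inE.
have hC : #|~: A| <= k.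
  case: (set_0Vmem (~: A)) => [->|[c0 hc0]]; first by rewrite cards0.
  apply: (cl _ (F c0).1) => x hx.
  apply/negPn/negP => hneq.
  have ha0 : ord0 \in A by rewrite inE.
  have hne : forall y, y \in ~: A -> (F y).1 != a by move=> y; rewrite !inE.
  have d1 : (F ord0).1 != (F c0).1 by rewrite eq_sym hne.
  have d2 : (F ord0).1 != (F x).1 by rewrite eq_sym hne.
  have n1 : ord0 != c0 by apply/eqP => e; rewrite -e in_setC ha0 in hc0.
  have n2 : ord0 != x by apply/eqP => e; rewrite -e in_setC ha0 in hx.
  have n3 : c0 != x by apply/eqP => e; rewrite e eqxx in hneq.
  have e1 := hE' _ _ n1; have e2 := hE' _ _ n2; have e3 := hE' _ _ n3.
  rewrite /padj (negbTE d1) in e1; rewrite /padj (negbTE d2) in e2;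
  rewrite /padj eq_sym (negbTE hneq) in e3.
  exact: (c5_tri e1 e3 e2).
have := cardsC A; rewrite card_ord.
move: hA hC; rewrite /=; lia.
Qed.

Lemma combine (G : graph) k (W : {set 'I_5 * 'I_(gsize G)}) (i j : 'I_5) : c5 i j ->
  contains_in [set v | (i, v) \in W] (J k.+1) ->
  contains_in [set v | (j, v) \in W] (J k.+1) ->
  exists F : 'I_(2 * k).+1 -> 'I_5 * 'I_(gsize G),
    [/\ injective F, (forall v, F v \in W) & (forall u v, @J_adj (2 * k).+1 u v -> padj (F u) (F v))].
Proof.
move=> hij [f [hf hfW hfE]] [g [hg hgW hgE]].
have nij : i != j by apply/eqP => e; rewrite e c5_irr in hij.
pose F (x : 'I_(2 * k).+1) : 'I_5 * 'I_(gsize G) :=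
  if (x : nat) <= k then (i, f (inord x)) else (j, g (inord (x - k))).
exists F; split.
- move=> u v; rewrite /F.
  case: (leqP u k) => hu; case: (leqP v k) => hv e.
  + case: e => /hf /(congr1 val) /=; rewrite !inordK // => e; apply: val_inj => /=; lia.
  + by case: e => e1; rewrite e1 eqxx in nij.
  + by case: e => e1; rewrite e1 eqxx in nij.
  + case: e => /hg /(congr1 val) /=.
    have hu' : u < (2 * k).+1 := ltn_ord u; have hv' : v < (2 * k).+1 := ltn_ord v.
    rewrite !inordK; [move=> e; apply: val_inj => /=; lia|lia|lia].
- move=> v; rewrite /F; case: (leqP v k) => _.
  + by have := hfW (inord v); rewrite inE.
  + by have := hgW (inord (v - k)); rewrite inE.
- move=> u v; rewrite /= /J_adj -val_eqE /= /F => huv.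
  have hu' : u < (2 * k).+1 := ltn_ord u; have hv' : v < (2 * k).+1 := ltn_ord v.
  case: (leqP u k) => hu; case: (leqP v k) => hv; rewrite /padj /=.
  + rewrite eqxx; apply: hfE; rewrite /= /J_adj -val_eqE /= !inordK //; lia.
  + by rewrite (negbTE nij).
  + by rewrite eq_sym (negbTE nij) /c5 orbC.
  + rewrite eqxx; apply: hgE; rewrite /= /J_adj -val_eqE /= !inordK; lia.
Qed.

Lemma five_taut (P0 P1 P2 P3 P4 Q0 Q1 Q2 Q3 Q4 : Prop) :
  P0 \/ Q0 -> P1 \/ Q1 -> P2 \/ Q2 -> P3 \/ Q3 -> P4 \/ Q4 ->
  (P0 /\ P1) \/ (P1 /\ P2) \/ (P2 /\ P3) \/ (P3 /\ P4) \/ (P4 /\ P0) \/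
  (Q0 /\ Q1) \/ (Q1 /\ Q2) \/ (Q2 /\ Q3) \/ (Q3 /\ Q4) \/ (Q4 /\ Q0).
Proof. tauto. Qed.

Definition o0 : 'I_5 := @Ordinal 5 0 isT.
Definition o1 : 'I_5 := @Ordinal 5 1 isT.
Definition o2 : 'I_5 := @Ordinal 5 2 isT.
Definition o3 : 'I_5 := @Ordinal 5 3 isT.
Definition o4 : 'I_5 := @Ordinal 5 4 isT.

Lemma C5G_arrows (G : graph) k : varrows2 G (J k.+1) (J k.+1) ->
  varrows2 (C5G G) (J (2 * k).+1) (J (2 * k).+1).
Proof.
move=> hG X.
pose Y : {set 'I_5 * 'I_(gsize G)} := [set t | enum_rank t \in X].
have hY : forall t, (enum_rank t \in X) = (t \in Y) by move=> t; rewrite inE.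
have hY' : forall t, (enum_rank t \in ~: X) = (t \in ~: Y) by move=> t; rewrite !in_setC inE.
have hC : forall i, ~: [set v | (i, v) \in Y] = [set v | (i, v) \in ~: Y].
  by move=> i; apply/setP => v; rewrite !inE.
have hi : forall i, contains_in [set v | (i, v) \in Y] (J k.+1) \/
                    contains_in [set v | (i, v) \in ~: Y] (J k.+1).
  by move=> i; rewrite -hC; apply: hG.
have fin1 : forall i j, c5 i j -> contains_in [set v | (i, v) \in Y] (J k.+1) ->
   contains_in [set v | (j, v) \in Y] (J k.+1) ->
   contains_in X (J (2 * k).+1) \/ contains_in (~: X) (J (2 * k).+1).
  move=> i j hij h1 h2; left; have [F [hF hW hE]] := combine hij h1 h2.
  exact: (@gof_contains_in _ _ (@padj_sym G) (@padj_irr G) Y X (J (2 * k).+1) F hY hF hW hE).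
have fin2 : forall i j, c5 i j -> contains_in [set v | (i, v) \in ~: Y] (J k.+1) ->
   contains_in [set v | (j, v) \in ~: Y] (J k.+1) ->
   contains_in X (J (2 * k).+1) \/ contains_in (~: X) (J (2 * k).+1).
  move=> i j hij h1 h2; right; have [F [hF hW hE]] := combine hij h1 h2.
  exact: (@gof_contains_in _ _ (@padj_sym G) (@padj_irr G) (~: Y) (~: X) (J (2 * k).+1) F hY' hF hW hE).
have := five_taut (hi o0) (hi o1) (hi o2) (hi o3) (hi o4).
case=> [[h1 h2]|[[h1 h2]|[[h1 h2]|[[h1 h2]|[[h1 h2]|[[h1 h2]|[[h1 h2]|[[h1 h2]|[[h1 h2]|[h1 h2]]]]]]]]]].
- exact: (fin1 o0 o1 isT h1 h2).
- exact: (fin1 o1 o2 isT h1 h2).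
- exact: (fin1 o2 o3 isT h1 h2).
- exact: (fin1 o3 o4 isT h1 h2).
- exact: (fin1 o4 o0 isT h1 h2).
- exact: (fin2 o0 o1 isT h1 h2).
- exact: (fin2 o1 o2 isT h1 h2).
- exact: (fin2 o2 o3 isT h1 h2).
- exact: (fin2 o3 o4 isT h1 h2).
- exact: (fin2 o4 o0 isT h1 h2).
Qed.

Lemma min_exists H1 H2 n m : (exists G, in_Fv2 H1 H2 n G /\ gsize G = m) ->
  exists a, is_Fv2 H1 H2 n a /\ a <= m.
Proof.
elim/ltn_ind: m => m IH hm.
case: (classic (exists G, in_Fv2 H1 H2 n G /\ gsize G < m)) => [[G [hG hs]]|hno].
- have [a [ha hle]] := IH _ hs (ex_intro _ G (conj hG erefl)).
  by exists a; split => //; apply: leq_trans hle (ltnW hs).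
- exists m; split => //; split => // G hG; rewrite leqNgt; apply/negP => hlt.
  by apply: hno; exists G.
Qed.

Theorem mainTheorem3 (k : nat) (hk : 2 <= k) (b : nat) :
  is_Fv2 (J k.+1) (J k.+1) k.+1 b ->
  exists a, is_Fv2 (J (2 * k).+1) (J (2 * k).+1) (2 * k).+1 a /\ a <= 5 * b.
Proof.
move=> [[G [[hK hA] <-]] _].
apply: min_exists; exists (C5G G); split; last exact: C5G_size.
split; [exact: C5G_Kfree | exact: C5G_arrows].
Qed.
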